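(* (2) Let $q$ be a prime power and let $v\ge 2$, $m,s,t$ be positive integers with $t\ge 2$, $m\le q+1$, $s\le t\le ms$. Then $K_{qv}^{RT}(m,s,ms-t)\le q^{t}\,K_{v}^{RT}(m,s,ms-t)$. (3) Let $q$ be a prime power, $v\ge 2$ and $t\ge 2$ integers. Then $K_{(q-1)v}^{RT}(q+1,t,qt)\le (q^{t}-2)\,K_{v}^{RT}(q+1,t,qt)$.
   Context: For positive integers $m,s$, the RT poset $[m\times s]$ is the set $\{1,\ldots,ms\}$ partitioned into $m$ blocks $B_i=\{is+1,\ldots,(i+1)s\}$; each block is a chain under the usual order of the integers, and elements of different blocks are incomparable. An ideal is a down-closed subset; $\langle A\rangle$ denotes the smallest ideal containing $A$. For $x,y\in\mathbb{Z}_q^{ms}$, $d_{RT}(x,y)=|\langle\{i:x_i\neq y_i\}\rangle|$. A code $C\subseteq \mathbb{Z}_q^{ms}$ is an $R$-covering if every $x\in\mathbb{Z}_q^{ms}$ has some $c\in C$ with $d_{RT}(x,c)\le R$; $K_q^{RT}(m,s,R)$ is the smallest size of an $R$-covering (for alphabet size $1$, $\mathbb{Z}_1^{ms}$ is a single point). *)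

(* Defs.v *)
From mathcomp Require Import all_boot.
Set Implicit Arguments. Unset Strict Implicit. Unset Printing Implicit Defensive.

(* RT poset [m x s]: positions are pairs (i, j), i : 'I_m the block index,
   j : 'I_s the position inside the block (block B_i = {i*s+1,...,(i+1)*s},
   position (i,j) corresponding to i*s + j + 1). *)
Definition rt_le (m s : nat) (a b : 'I_m * 'I_s) : bool :=
  (a.1 == b.1) && (a.2 <= b.2).

Definition rt_ideal (m s : nat) (I : {set 'I_m * 'I_s}) : bool :=
  [forall a, forall b, (rt_le a b && (b \in I)) ==> (a \in I)].

Definition rt_gen (m s : nat) (A : {set 'I_m * 'I_s}) : {set 'I_m * 'I_s} :=
  \bigcap_(I | rt_ideal I && (A \subset I)) I.

Definition rt_word (q m s : nat) := {ffun 'I_m * 'I_s -> 'I_q}.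

Definition d_RT (q m s : nat) (x y : rt_word q m s) : nat :=
  #|rt_gen [set p | x p != y p]|.

Definition rt_covering (q m s R : nat) (C : {set rt_word q m s}) : bool :=
  [forall x : rt_word q m s, exists c in C, d_RT x c <= R].

Definition rt_cov_size (q m s R : nat) : pred nat :=
  fun n => [exists C : {set rt_word q m s}, rt_covering R C && (#|C| == n)].

Lemma rt_covering_exists (q m s R : nat) :
  exists n, rt_cov_size q m s R n.
Proof.
exists #|[set: rt_word q m s]|; apply/existsP; exists [set: rt_word q m s].
rewrite eqxx andbT; apply/forallP => x; apply/existsP; exists x.
rewrite in_setT /=.
rewrite /d_RT.
have -> : [set p | x p != x p] = set0 by apply/setP => p; rewrite !inE eqxx.
have -> : rt_gen (set0 : {set 'I_m * 'I_s}) = set0.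
  apply/setP => p; rewrite inE; apply/negbTE/negP => /bigcapP H.
  suff : p \in (set0 : {set 'I_m * 'I_s}) by rewrite inE.
  apply: H; rewrite sub0set andbT.
  by apply/forallP => a; apply/forallP => b; rewrite inE andbF.
by rewrite cards0.
Qed.

Definition K_RT (q m s R : nat) : nat :=
  ex_minn (rt_covering_exists q m s R).

Definition prime_power (q : nat) : Prop :=
  exists p k, prime p /\ 0 < k /\ q = p ^ k.

(* Main.v *)
Require Import Defs.
From mathcomp Require Import all_boot.
From mathcomp Require Import all_algebra all_field.
From mathcomp Require Import zify.
Set Implicit Arguments. Unset Strict Implicit. Unset Printing Implicit Defensive.

Section Gen.
Variables m s : nat.
Implicit Types (A I J : {set 'I_m * 'I_s}).

Lemma rt_gen_sub A : A \subset rt_gen A.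
Proof. by apply/bigcapsP => I /andP[]. Qed.

Lemma rt_gen_min A J : rt_ideal J -> A \subset J -> rt_gen A \subset J.
Proof. by move=> hJ hA; apply: bigcap_inf; rewrite hJ hA. Qed.

Lemma rt_gen_ideal A : rt_ideal (rt_gen A).
Proof.
apply/forallP => a; apply/forallP => b; apply/implyP => /andP[hab /bigcapP hb].
apply/bigcapP => I hI; have hbI := hb I hI.
move: hI => /andP[/forallP /(_ a) /forallP /(_ b) /implyP H _].
by apply: H; rewrite hab hbI.
Qed.

Lemma ideal_step I : rt_ideal I -> #|I| < m * s ->
  exists p, (p \notin I) && rt_ideal (p |: I).
Proof.
move=> hI hc.
have : exists p, p \notin I.
  apply/existsP; rewrite -(negbK [exists _, _]) negb_exists; apply/negP.
  move=> /forallP H; move: hc.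
  have -> : I = setT by apply/setP => p; rewrite inE; move: (H p); rewrite negbK.
  by rewrite cardsT card_prod !card_ord ltnn.
move=> [p0 hp0].
pose p := [arg min_(p < p0 | p \notin I) (p.2 : nat)].
exists p; rewrite /p; case: arg_minnP => //= pm hpm hmin.
rewrite hpm /=.
apply/forallP => a; apply/forallP => b; apply/implyP => /andP[hab].
move: hab => /andP[/eqP h1 h2].
rewrite !inE => /orP[/eqP hb|hb]; last first.
  move: hI => /forallP /(_ a) /forallP /(_ b) /implyP H.
  by rewrite H ?orbT // /rt_le h1 eqxx h2.
subst b; case ha: (a \in I); first by rewrite orbT.
have := hmin a; rewrite ha => /(_ isT) h3.
apply/orP; left.
rewrite [a]surjective_pairing [pm]surjective_pairing xpair_eqE h1 eqxx /=.
by rewrite -val_eqE /= eqn_leq h2 h3.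
Qed.

Lemma ideal_extend_k k I : rt_ideal I -> #|I| + k <= m * s ->
  exists2 J, rt_ideal J & (I \subset J) && (#|J| == #|I| + k).
Proof.
elim: k I => [|k IH] I hI hk.
  by exists I => //; rewrite subxx addn0 eqxx.
have [p /andP[hp hI']] := ideal_step hI (ltac:(lia)).
have hc : #|p |: I| = #|I|.+1 by rewrite cardsU1 hp.
have [J hJ /andP[hsub /eqP hcard]] := IH _ hI' (ltac:(rewrite hc; lia)).
exists J => //; rewrite hcard hc addSnnS eqxx andbT.
by apply: subset_trans hsub; apply: subsetUr.
Qed.

Lemma ideal_extend I n : rt_ideal I -> #|I| <= n -> n <= m * s ->
  exists2 J, rt_ideal J & (I \subset J) && (#|J| == n).
Proof.
move=> hI h1 h2; have := @ideal_extend_k (n - #|I|) I hI (ltac:(lia)).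
by rewrite subnKC.
Qed.
End Gen.
Lemma card_gt (s j : nat) : #|[set j' : 'I_s | (j < j')%N]| = (s - j.+1)%N.
Proof.
rewrite -sum1_card big_mkcond /=.
under eq_bigr do rewrite inE.
rewrite -(big_mkord xpredT (fun j' => if j < j' then 1 else 0)).
case: (leqP j.+1 s) => hs.
  rewrite (@big_cat_nat _ _ _ j.+1) /=; [|by []|exact: hs].
  rewrite big1_seq; last by move=> i /andP[_]; rewrite mem_iota /= add0n ltnS => /leq_gtF ->.
  rewrite add0n (eq_big_nat _ _ (F2 := fun _ => 1)); last by move=> i /andP[hi _]; rewrite hi.
  by rewrite sum_nat_const_nat muln1.
rewrite big1_seq; last first.
  by move=> i /andP[_]; rewrite mem_iota /= add0n => hi; have -> : (j < i) = false by apply/negbTE; rewrite -leqNgt; lia.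
lia.
Qed.

Lemma top_fact m s (G : {set 'I_m * 'I_s})
  (up : forall a b, rt_le a b -> a \in G -> b \in G) (i : 'I_m) (j : 'I_s) :
  s.-1 - j < #|[set j' : 'I_s | (i, j') \in G]| -> (i, j) \in G.
Proof.
move=> h; case: (boolP ((i, j) \in G)) => // hn; exfalso.
move: h; rewrite ltnNge => /negP; apply.
have hj := ltn_ord j.
apply: leq_trans (subset_leq_card (_ : _ \subset [set j' : 'I_s | j < j'])) _.
  apply/subsetP => j'; rewrite !inE => hj'; rewrite ltnNge; apply/negP => hle.
  by move/negP: hn; apply; apply: (up (i, j') (i, j)) => //; rewrite /rt_le /= eqxx hle.
by rewrite card_gt; lia.
Qed.

Lemma sum_blocks m s (G : {set 'I_m * 'I_s}) :
  \sum_(i : 'I_m) #|[set j : 'I_s | (i, j) \in G]| = #|G|.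
Proof.
transitivity (\sum_(p : 'I_m * 'I_s) (if p \in G then 1 else 0)); last first.
  by rewrite -sum1_card [RHS]big_mkcond.
rewrite (eq_bigr (fun p => if (p.1, p.2) \in G then 1 else 0)); last by move=> [a b].
rewrite -(pair_big xpredT xpredT (fun i j => if (i, j) \in G then 1 else 0)) /=.
apply: eq_bigr => i _; rewrite -sum1_card big_mkcond /=.
by apply: eq_bigr => j _; rewrite inE.
Qed.

Definition Surj (r m s R : nat) (D : {set rt_word r m s}) : Prop :=
  forall (x : rt_word r m s) (I : {set 'I_m * 'I_s}), rt_ideal I -> #|I| = R ->
  exists2 d, d \in D & forall p, p \notin I -> x p = d p.

Lemma K_le r m s R (C : {set rt_word r m s}) :
  rt_covering R C -> K_RT r m s R <= #|C|.
Proof.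
rewrite /K_RT; case: ex_minnP => n _ H hC; apply: H.
by apply/existsP; exists C; rewrite hC eqxx.
Qed.

Lemma K_spec r m s R :
  exists2 C : {set rt_word r m s}, rt_covering R C & #|C| = K_RT r m s R.
Proof.
rewrite /K_RT; case: ex_minnP => n /existsP [C /andP[h1 /eqP h2]] _.
by exists C.
Qed.

Lemma encI_proof r v (a : 'I_r) (b : 'I_v) : a * v + b < r * v.
Proof.
have ha := ltn_ord a; have hb := ltn_ord b.
have : a.+1 * v <= r * v by rewrite leq_mul2r ha orbT.
rewrite mulSn; lia.
Qed.

Definition encI r v (a : 'I_r) (b : 'I_v) : 'I_(r * v) := Ordinal (encI_proof a b).

Lemma product r v m s R (D : {set rt_word r m s}) :
  0 < v -> R <= m * s -> Surj R D ->
  K_RT (r * v) m s R <= #|D| * K_RT v m s R.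
Proof.
move=> hv hR hD.
have [C hC <-] := K_spec v m s R.
pose encW (d : rt_word r m s) (c : rt_word v m s) : rt_word (r * v) m s :=
  [ffun p => encI (d p) (c p)].
pose E := [set encW dc.1 dc.2 | dc in setX D C].
apply: leq_trans (K_le (C := E) _) _; last first.
  by rewrite -cardsX; apply: leq_imset_card.
apply/forallP => x.
have hx1 p : x p %/ v < r by rewrite ltn_divLR // ltn_ord.
pose x1 : rt_word r m s := [ffun p => Ordinal (hx1 p)].
pose x2 : rt_word v m s := [ffun p => Ordinal (ltn_pmod (x p) hv)].
have /existsP [c /andP[cC hc]] := forallP hC x2.
pose I0 := rt_gen [set p | x2 p != c p].
have hI0 : #|I0| <= R by [].
have [J hJ /andP[hsub /eqP hJc]] := ideal_extend (rt_gen_ideal [set p | x2 p != c p]) hI0 hR.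
have [d dD hd] := hD x1 J hJ hJc.
apply/existsP; exists (encW d c); apply/andP; split.
  by apply/imsetP; exists (d, c) => //; rewrite inE dD cC.
rewrite /d_RT; rewrite -hJc; apply: subset_leq_card; apply: rt_gen_min => //.
apply/subsetP => p; rewrite inE; apply: contraR => hpJ.
have h1 := hd p hpJ.
have h2 : x2 p = c p.
  apply/eqP; rewrite -[_ == _]negbK; apply/negP => hne.
  have : p \in I0 by apply: (subsetP (rt_gen_sub _)); rewrite inE.
  by move=> hp; move/negP: hpJ; apply; apply: (subsetP hsub).
apply/eqP; apply: val_inj => /=.
rewrite ffunE /= -[d p]h1 -[c p]h2 !ffunE /=.
by rewrite -divn_eq.
Qed.

Section Fusion.
Variable n : nat.

Definition piF (a b y : 'I_n.+2) : 'I_n.+1 :=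
  let y' := if y == b then a else y in inord (if b < y' then (y' : nat).-1 else y').
Definition sigF (b : 'I_n.+2) (z : 'I_n.+1) : 'I_n.+2 :=
  inord (if z < b then (z : nat) else z.+1).
Definition partner (a b y : 'I_n.+2) := if y == a then b else a.

Lemma pi_sig a b z : a != b -> piF a b (sigF b z) = z.
Proof.
move=> hab; apply: val_inj; rewrite /piF /sigF.
have hz := ltn_ord z; have hb := ltn_ord b.
case: (ltnP z b) => hzb.
  have e : (inord z : 'I_n.+2) = z :> nat by rewrite inordK //; lia.
  have -> : (inord z == b) = false by apply/negbTE; rewrite -val_eqE /= e; lia.
  have -> : (b < (inord z : 'I_n.+2)) = false by rewrite e ltnNge ltnW.
  by rewrite /= inordK e //; lia.
have e : (inord z.+1 : 'I_n.+2) = z.+1 :> nat by rewrite inordK //; lia.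
have -> : (inord z.+1 == b) = false by apply/negbTE; rewrite -val_eqE /= e; lia.
have -> : (b < (inord z.+1 : 'I_n.+2)) = true by rewrite e ltnS.
by rewrite /= e inordK //=; lia.
Qed.

Lemma pi_partner a b y : (y == a) || (y == b) ->
  piF a b (partner a b y) = piF a b y.
Proof.
move=> hy; rewrite /piF /partner; case: (y =P a) => [->|hya].
  by rewrite eqxx; case: (a =P b) => [->|]; rewrite ?eqxx.
have hyb : y = b by move: hy; rewrite (introF eqP hya) => /eqP.
by subst y; rewrite !eqxx; case: (a =P b) => [->|]; rewrite ?eqxx.
Qed.

Lemma partner_neq a b y : a != b -> (y == a) || (y == b) -> partner a b y != y.
Proof.
rewrite /partner => hab hy; case: (y =P a) => [->|hya]; first by rewrite eq_sym.
have hyb : y = b by move: hy; rewrite (introF eqP hya) => /eqP.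
by subst y.
Qed.

Lemma pick_other (T : eqType) (c c1 c2 e1 e2 : T) :
  (c == c1) || (c == c2) -> e1 != c -> e2 != c -> e1 != e2 ->
  ((e1 != c1) && (e1 != c2)) || ((e2 != c1) && (e2 != c2)).
Proof.
move=> /orP[/eqP E|/eqP E] h1 h2 h12; subst c.
  rewrite h1 h2 /=; case: (e1 =P c2) => [E|]; last by [].
  by rewrite /= -E eq_sym.
rewrite h1 h2 /= !andbT; case: (e1 =P c1) => [E|]; last by [].
by rewrite /= -E eq_sym.
Qed.

Lemma fusion m s R (D : {set rt_word n.+2 m s}) :
  R.+2 <= m * s -> Surj R D ->
  exists D' : {set rt_word n.+1 m s}, Surj R D' /\ #|D'| + 2 <= #|D|.
Proof.
move=> hR hD.
have set0I : rt_ideal (set0 : {set 'I_m * 'I_s}).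
  by apply/forallP => a; apply/forallP => b; rewrite inE andbF.
have [I0 hI0 /andP[_ /eqP hI0c]] := ideal_extend set0I (n := R) (ltac:(by rewrite cards0)) (ltac:(lia) : R <= m * s).
have [p0 hp0] : exists p, p \notin I0.
  apply/existsP; rewrite -(negbK [exists _, _]) negb_exists; apply/negP.
  move=> /forallP H; move: hR; rewrite -hI0c.
  have -> : I0 = setT by apply/setP => p; rewrite inE; move: (H p); rewrite negbK.
  by rewrite cardsT card_prod !card_ord; lia.
have [c1 c1D hc1] := hD [ffun => ord0] I0 hI0 hI0c.
have [c2 c2D hc2] := hD [ffun => ord_max] I0 hI0 hI0c.
have c12 : c1 != c2.
  apply/negP => /eqP e; move: (hc1 p0 hp0) (hc2 p0 hp0); rewrite e !ffunE => <-.
  by move/(congr1 val).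
pose A p := c1 p.
pose B p := if c2 p != c1 p then c2 p else (if c1 p == ord0 then ord_max else ord0).
have hAB p : A p != B p.
  rewrite /A /B; case: ifP => [|_]; first by rewrite eq_sym.
  by case: ifP => [/eqP->|/negbT]; rewrite // eq_sym.
have hc1AB p : (c1 p == A p) || (c1 p == B p) by rewrite eqxx.
have hc2AB p : (c2 p == A p) || (c2 p == B p).
  rewrite /A /B; case: ifP => [_|/negbFE/eqP ->]; by rewrite eqxx ?orbT.
pose piW (c : rt_word n.+2 m s) : rt_word n.+1 m s := [ffun p => piF (A p) (B p) (c p)].
pose D0 := D :\: [set c1; c2].
exists (piW @: D0); split; last first.
  apply: leq_trans (leq_add (leq_imset_card _ _) (leqnn 2)) _.
  rewrite /D0 cardsD (setIidPr _); last by apply/subsetP => c; rewrite !inE => /orP[]/eqP->.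
  rewrite cards2 c12 /=.
  have : #|[set c1; c2]| <= #|D|.
    by apply: subset_leq_card; apply/subsetP => c; rewrite !inE => /orP[]/eqP->.
  by rewrite cards2 c12 /= => H; rewrite subnK.
move=> x' I hI hIc.
suff [c' hc'D hc'] : exists2 c', c' \in D0 & forall p, p \notin I -> piF (A p) (B p) (c' p) = x' p.
  exists (piW c'); first by apply/imsetP; exists c'.
  by move=> p hp; rewrite ffunE hc'.
pose x : rt_word n.+2 m s := [ffun p => sigF (B p) (x' p)].
have [c cD hc] := hD x I hI hIc.
have hpix p : piF (A p) (B p) (x p) = x' p by rewrite ffunE pi_sig.
case hcin : (c \in [set c1; c2]); last first.
  exists c; first by rewrite inE hcin cD.
  by move=> p hp; rewrite -hc.
have hcAB p : p \notin I -> (x p == A p) || (x p == B p).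
  move=> hp; rewrite hc //; move: hcin; rewrite !inE => /orP[]/eqP->; by [].
have [p1 [p2 [hp1 hp2 hp12]]] : exists p1 p2, [/\ p1 \in ~: I, p2 \in ~: I & p1 != p2].
  apply/card_gt1P; have := cardsC I; rewrite card_prod !card_ord hIc; lia.
rewrite !inE in hp1 hp2.
pose xi (q : 'I_m * 'I_s) : rt_word n.+2 m s :=
  [ffun p => if p == q then partner (A p) (B p) (x p) else x p].
have [e1 e1D he1] := hD (xi p1) I hI hIc.
have [e2 e2D he2] := hD (xi p2) I hI hIc.
have he1p1 : e1 p1 = partner (A p1) (B p1) (x p1) by rewrite -he1 // ffunE eqxx.
have he2p2 : e2 p2 = partner (A p2) (B p2) (x p2) by rewrite -he2 // ffunE eqxx.
have he2p1 : e2 p1 = x p1 by rewrite -he2 // ffunE (negbTE hp12).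
have ne1 : e1 != c.
  apply/negP => /eqP e; move: he1p1; rewrite e -hc // => h.
  by move: (partner_neq (hAB p1) (hcAB p1 hp1)); rewrite -h eqxx.
have ne2 : e2 != c.
  apply/negP => /eqP e; move: he2p2; rewrite e -hc // => h.
  by move: (partner_neq (hAB p2) (hcAB p2 hp2)); rewrite -h eqxx.
have ne12 : e1 != e2.
  apply/negP => /eqP e; move: he1p1; rewrite e he2p1 => h.
  by move: (partner_neq (hAB p1) (hcAB p1 hp1)); rewrite -h eqxx.
have good (e : rt_word n.+2 m s) q : e \in D -> (forall p, p \notin I -> xi q p = e p) ->
    q \notin I -> (e != c1) && (e != c2) ->
    exists2 c', c' \in D0 & forall p, p \notin I -> piF (A p) (B p) (c' p) = x' p.
  move=> eD he hq hne; exists e; first by rewrite !inE negb_or hne eD.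
  move=> p hp; rewrite -he // ffunE; case: ifP => [/eqP ->|_]; last exact: hpix.
  by rewrite pi_partner ?hcAB // hpix.
have hcc : (c == c1) || (c == c2) by move: hcin; rewrite !inE.
case/orP: (pick_other hcc ne1 ne2 ne12) => h.
  exact: good e1 p1 e1D he1 hp1 h.
exact: good e2 p2 e2D he2 hp2 h.
Qed.
End Fusion.

Section Poly.
Import GRing.Theory.
Local Open Scope ring_scope.
Variable F : fieldType.

Lemma taylor_dvd (g : {poly F}) (x : F) (a : nat) :
  (forall k, (k < a)%N -> (g \Po ('X + x%:P))`_k = 0) -> ('X - x%:P) ^+ a %| g.
Proof.
move=> H; set h := g \Po ('X + x%:P).
have hg : g = h \Po ('X - x%:P).
  by rewrite /h -comp_polyA comp_polyD comp_polyX comp_polyC subrK comp_polyXr.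
have ht : take_poly a h = 0.
  apply/polyP => i; rewrite coef_take_poly coef0; case: ifP => // /H.
  by rewrite /h.
have := poly_take_drop a h; rewrite ht add0r => hh.
rewrite hg -hh comp_polyM.
have -> : 'X^a \Po ('X - x%:P) = ('X - x%:P) ^+ a.
  elim: a {H ht hh} => [|a IH]; first by rewrite expr0 comp_polyC.
  by rewrite !exprS comp_polyM comp_polyX IH.
exact: dvdp_mull (dvdpp _).
Qed.

Lemma mult_bound (I : eqType) (r : seq I) (pt : I -> F) (a : I -> nat) (g : {poly F}) :
  uniq r -> {in r &, injective pt} -> g != 0 ->
  (forall i, i \in r -> ('X - (pt i)%:P) ^+ (a i) %| g) ->
  (\sum_(i <- r) a i < size g)%N.
Proof.
elim: r g => [|i r IH] g /= hu hinj hg hd.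
  by rewrite big_nil lt0n size_poly_eq0.
rewrite big_cons.
have /dvdpP [h hh] := hd i (mem_head _ _).
move/andP: hu => [hir hu].
have hh0 : h != 0 by apply: contraNneq hg => e; rewrite hh e mul0r.
have hX : ('X - (pt i)%:P) ^+ (a i) != 0 by rewrite expf_neq0 // polyXsubC_eq0.
have hsz : size g = (size h + a i)%N.
  by rewrite hh size_mul // size_exp_XsubC addnS.
have hinj' : {in r &, injective pt}.
  by move=> x y hx hy; apply: hinj; rewrite inE ?hx ?hy orbT.
have := IH h hu hinj' hh0.
have H : (forall i0 : I, i0 \in r -> ('X - (pt i0)%:P) ^+ a i0 %| h).
  move=> j hj; have := hd j (ltac:(by rewrite inE hj orbT)); rewrite hh Gauss_dvdpl //.
  apply: coprimep_expl; apply: coprimep_expr; apply: coprimep_XsubC2.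
  rewrite subr_eq0; apply/negP => /eqP e.
  have : j = i by apply: hinj; rewrite ?inE ?hj ?eqxx ?orbT.
  by move=> eji; move: hir; rewrite -eji hj.
by move=> /(_ H); rewrite hsz; lia.
Qed.
End Poly.

Section MDS.
Import GRing.Theory.
Local Open Scope ring_scope.
Variable F : finFieldType.
Variables m s t : nat.

Definition alpha (i : nat) : F := nth 0 (enum F) i.
Definition cw (g : {poly F}) (p : 'I_m * 'I_s) : F :=
  if (p.1 < #|F|)%N then (g \Po ('X + (alpha p.1)%:P))`_(s.-1 - p.2)
  else g`_(t.-1 - (s.-1 - p.2)).

Lemma cwB g1 g2 p : cw (g1 - g2) p = cw g1 p - cw g2 p.
Proof. by rewrite /cw; case: ifP => _; rewrite ?comp_polyB coefB. Qed.

Lemma kernel (G : {set 'I_m * 'I_s}) (g : {poly F}) :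
  (m <= #|F|.+1)%N -> (s <= t)%N ->
  (forall a b, rt_le a b -> a \in G -> b \in G) ->
  #|G| = t -> (size g <= t)%N -> (forall p, p \in G -> cw g p = 0) -> g = 0.
Proof.
move=> hm hst up hG hsz hcw.
apply/eqP; apply: contraT => hg0.
pose a (i : 'I_m) := #|[set j : 'I_s | (i, j) \in G]|.
have has i : (a i <= s)%N by rewrite /a; apply: leq_trans (max_card _) _; rewrite card_ord.
have htop := top_fact up.
have hsum : (\sum_(i : 'I_m | (i < #|F|)%N) a i + \sum_(i : 'I_m | ~~ (i < #|F|)%N) a i = t)%N.
  by rewrite -hG -sum_blocks [RHS](bigID (fun i : 'I_m => (i < #|F|)%N)) /=.
have hA : (\sum_(i : 'I_m | (i < #|F|)%N) a i < size g)%N.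
  rewrite -big_filter; apply: (mult_bound (pt := fun i : 'I_m => alpha i) (a := a)) => //.
  - by rewrite filter_uniq // index_enum_uniq.
  - move=> i j; rewrite !mem_filter => /andP[hi _] /andP[hj _] e; apply: val_inj.
    apply/eqP; rewrite -(@nth_uniq F 0 (enum F) i j) ?enum_uniq -?cardE //.
    by apply/eqP; exact: e.
  - move=> i; rewrite mem_filter => /andP[hi _]; apply: taylor_dvd => k hk.
    have hks : (k < s)%N by have := has i; lia.
    have hj : (s.-1 - k < s)%N by lia.
    have hti : (i, Ordinal hj) \in G by apply: htop => /=; rewrite -/(a i); lia.
    have := hcw _ hti.
    by rewrite /cw /= hi (_ : (s.-1 - (s.-1 - k) = k)%N) //; lia.
have hB : (size g <= t - \sum_(i : 'I_m | ~~ (i < #|F|)%N) a i)%N.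
  case: (pickP (fun i : 'I_m => ~~ (i < #|F|)%N)) => [i0 hi0|hnone]; last first.
    by rewrite big_pred0 // subn0.
  rewrite (big_pred1 i0); last first.
    move=> i /=; apply/idP/eqP => [hi|->//]; apply: ord_inj.
    move: hi0 hi hm; move: #|F| => q hi0 hi hm'.
    have := ltn_ord i; have := ltn_ord i0; lia.
  apply/leq_sizeP => n hn.
  case: (leqP t n) => htn; first by move/leq_sizeP: hsz; apply.
  have hk : (t.-1 - n < a i0)%N by lia.
  have hks : (t.-1 - n < s)%N by have := has i0; lia.
  have hj : (s.-1 - (t.-1 - n) < s)%N by lia.
  have hti : (i0, Ordinal hj) \in G by apply: htop => /=; rewrite -/(a i0); lia.
  have := hcw _ hti.
  rewrite /cw /= (negbTE hi0).
  by rewrite (_ : (t.-1 - (s.-1 - (s.-1 - (t.-1 - n))) = n)%N) //; lia.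
lia.
Qed.

Lemma mds : (m <= #|F|.+1)%N -> (s <= t)%N -> (t <= m * s)%N ->
  exists D : {set rt_word #|F| m s}, Surj (m * s - t) D /\ (#|D| <= #|F| ^ t)%N.
Proof.
move=> hm hst htm.
pose fget (f : {ffun 'I_t -> F}) (i : nat) : F := if insub i is Some j then f j else 0.
have fgetE f (j : 'I_t) : fget f j = f j by rewrite /fget valK.
pose pf (f : {ffun 'I_t -> F}) : {poly F} := \poly_(i < t) fget f i.
pose word (f : {ffun 'I_t -> F}) : rt_word #|F| m s := [ffun p => enum_rank (cw (pf f) p)].
exists [set word f | f : {ffun 'I_t -> F}]; split; last first.
  by apply: leq_trans (leq_imset_card _ _) _; rewrite card_ffun card_ord.
move=> x I hI hIc.
pose G := ~: I.
have hGc : #|G| = t.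
  have := cardsC I; rewrite card_prod !card_ord hIc -/G; lia.
have up : forall a b, rt_le a b -> a \in G -> b \in G.
  move=> a b hab; rewrite !inE; apply: contra => hb.
  by move/forallP: hI => /(_ a) /forallP /(_ b) /implyP; apply; rewrite hab hb.
pose res (f : {ffun 'I_t -> F}) : {ffun 'I_m * 'I_s -> F} :=
  [ffun p => if p \in G then cw (pf f) p else 0].
have res_inj : injective res.
  move=> f1 f2 e.
  pose g := \poly_(i < t) (fget f1 i - fget f2 i).
  have hg : g = pf f1 - pf f2.
    by apply/polyP => i; rewrite coefB !coef_poly; case: ifP; rewrite ?subr0.
  have hcw0 : forall p, p \in G -> cw g p = 0.
    move=> p hp.
    have := congr1 (fun h : {ffun 'I_m * 'I_s -> F} => h p) e; rewrite /= !ffunE hp => e'.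
    by rewrite hg cwB e' subrr.
  have : g = 0 by apply: (kernel hm hst up hGc (size_poly _ _) hcw0).
  move=> g0; apply/ffunP => i; apply/eqP; rewrite -subr_eq0; apply/eqP.
  by have := congr1 (fun h : {poly F} => h`_i) g0; rewrite coef_poly ltn_ord coef0 !fgetE.
pose Y := [set res f | f : {ffun 'I_t -> F}].
have hsub : Y \subset pffun_on (0 : F) G predT.
  apply/subsetP => y /imsetP [f _ ->]; apply/pffun_onP; split => //.
  apply/subsetP => p; rewrite !inE ffunE; case: ifP => [|_]; first by rewrite inE.
  by rewrite eqxx.
have hY : Y =i pffun_on (0 : F) G predT.
  apply/subset_cardP => //.
  by rewrite card_imset // card_pffun_on card_ffun card_ord hGc.
pose y : {ffun 'I_m * 'I_s -> F} := [ffun p => if p \in G then enum_val (x p) else 0].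
have : y \in Y.
  rewrite hY; apply/pffun_onP; split => //.
  apply/subsetP => p; rewrite !inE ffunE; case: ifP => [|_]; first by rewrite inE.
  by rewrite eqxx.
move=> /imsetP [f _ ef].
exists (word f); first by apply/imsetP; exists f.
move=> p hp.
have := congr1 (fun h : {ffun 'I_m * 'I_s -> F} => h p) ef; rewrite /= !ffunE (_ : p \in G); last by rewrite inE.
by move=> <-; rewrite enum_valK.
Qed.
End MDS.

Lemma field_of (q : nat) : prime_power q ->
  exists F : finFieldType, #|F| = q.
Proof.
move=> [p [k [hp [hk ->]]]].
by have [F _ hF] := pPrimePowerField hp hk; exists F.
Qed.

Theorem corollary6 :
  (forall q v m s t : nat,
      prime_power q -> 2 <= v -> 0 < m -> 0 < s -> 2 <= t ->
      m <= q + 1 -> s <= t -> t <= m * s ->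
      K_RT (q * v) m s (m * s - t) <= q ^ t * K_RT v m s (m * s - t))
  /\
  (forall q v t : nat,
      prime_power q -> 2 <= v -> 2 <= t ->
      K_RT ((q - 1) * v) (q + 1) t (q * t) <= (q ^ t - 2) * K_RT v (q + 1) t (q * t)).
Proof.
split.
  move=> q v m s t hq hv hm hs ht hmq hst htm.
  have [F hF] := field_of hq; subst q.
  have hmq' : m <= #|F|.+1 by rewrite -addn1.
  have [D [hD hDc]] := mds hmq' hst htm.
  apply: leq_trans (product (ltac:(lia) : 0 < v) (leq_subr _ _) hD) _.
  by rewrite leq_mul2r hDc orbT.
move=> q v t hq hv ht.
have [F hF] := field_of hq.
have hq2 : 2 <= q.
  case: hq => p [k [hp [hk ->]]]; have := prime_gt1 hp => hp1.
  by apply: leq_trans hp1 _; rewrite -{1}(expn1 p) leq_exp2l // prime_gt1.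
have hmq' : (q + 1) <= #|F|.+1 by rewrite hF addn1.
have [D [hD hDc]] := mds hmq' (leqnn t) (ltac:(nia) : t <= (q + 1) * t).
have [n hn] : exists n, q = n.+2 by exists (q - 2); lia.
have eR : (q + 1) * t - t = q * t by lia.
rewrite eR in hD.
move: D hD hDc; rewrite hF hn => D hD hDc.
have hR : (n.+2 * t).+2 <= (n.+2 + 1) * t by nia.
have [D' [hD' hD'c]] := fusion hR hD.
have hR' : n.+2 * t <= (n.+2 + 1) * t by nia.
have := product (ltac:(lia) : 0 < v) hR' hD'.
rewrite (_ : n.+2 - 1 = n.+1) //.
move=> H; apply: leq_trans H _.
rewrite leq_mul2r; apply/orP; right; lia.
Qed.
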